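(* Let $M\in M_n(\mathbb{Z})$ be a symmetric positive semidefinite matrix, and let $\lambda_1$ be its largest eigenvalue. Collapsed values are integers. (i) If $\mu\notin[-1,\lambda_1+\sqrt2]$, then $\mu$ is not a collapsed value of $M$. (ii) The value $\mu=-1$ is a collapsed value of $M$ if either two columns of $M$ are equal or $Me_i=-e_j$ for some $i\neq j$. (iii) If $M$ is positive definite or is the Laplacian of a connected graph, then no $\mu<0$ is a collapsed value of $M$. (iv) If $M$ is positive definite with smallest eigenvalue $\lambda_n>0$, and $\mu$ is a collapsed value of $M$, then $\mu\ge\lambda_n-\sqrt2$.
   Context: For $M\in M_n(\mathbb{Z})$, $\mathrm{Im}(M)$ is the $\mathbb{Z}$-span of its columns; $M$ is spread if the quotient map $\mathbb{Z}^n\to\mathbb{Z}^n/\mathrm{Im}(M)$ is injective on the standard basis $\{e_1,\dots,e_n\}$. An integer $\mu$ is a collapsed value of $M$ if $M-\mu\,\mathrm{Id}$ is not spread. The Laplacian of a graph (multiple edges allowed, no loops) is the matrix with diagonal entries the vertex degrees and off-diagonal $(i,j)$ entry minus the number of edges joining $v_i$ and $v_j$. *)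

(* Defs.v *)
From HB Require Import structures.
From mathcomp Require Import all_boot all_order all_algebra.
From mathcomp Require Import all_classical all_reals.
Set Implicit Arguments. Unset Strict Implicit. Unset Printing Implicit Defensive.
Import Order.TTheory GRing.Theory Num.Theory.
Local Open Scope ring_scope.

Definition e_ {n : nat} (i : 'I_n) : 'cV[int]_n := delta_mx i 0.

Definition in_image {n : nat} (M : 'M[int]_n) (v : 'cV[int]_n) : Prop :=
  exists x : 'cV[int]_n, M *m x = v.

(* M is spread: Z^n -> Z^n / Im(M) is injective on {e_1,...,e_n} *)
Definition spread {n : nat} (M : 'M[int]_n) : Prop :=
  forall i j : 'I_n, i != j -> ~ in_image M (e_ i - e_ j).

Definition collapsed_value {n : nat} (M : 'M[int]_n) (mu : int) : Prop :=
  ~ spread (M - mu%:M).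

Definition realmx (R : realType) {n : nat} (M : 'M[int]_n) : 'M[R]_n :=
  map_mx (fun z : int => z%:~R) M.

Definition psd (R : realType) {n : nat} (M : 'M[int]_n) : Prop :=
  forall v : 'cV[R]_n, 0 <= (v^T *m realmx R M *m v) 0 0.

Definition posdef (R : realType) {n : nat} (M : 'M[int]_n) : Prop :=
  forall v : 'cV[R]_n, v != 0 -> 0 < (v^T *m realmx R M *m v) 0 0.

Definition largest_eigenvalue (R : realType) {n : nat} (M : 'M[int]_n) (l : R) :=
  eigenvalue (realmx R M) l /\ forall a : R, eigenvalue (realmx R M) a -> a <= l.

Definition smallest_eigenvalue (R : realType) {n : nat} (M : 'M[int]_n) (l : R) :=
  eigenvalue (realmx R M) l /\ forall a : R, eigenvalue (realmx R M) a -> l <= a.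

(* A multigraph without loops on vertex set 'I_n : w i j = number of edges
   joining v_i and v_j. *)
Definition multigraph {n : nat} (w : 'I_n -> 'I_n -> nat) : Prop :=
  (forall i j, w i j = w j i) /\ (forall i, w i i = 0%N).

Definition graph_connected {n : nat} (w : 'I_n -> 'I_n -> nat) : Prop :=
  forall i j : 'I_n, connect (fun a b => (0 < w a b)%N) i j.

Definition laplacian {n : nat} (w : 'I_n -> 'I_n -> nat) : 'M[int]_n :=
  \matrix_(i, j) (if i == j then (\sum_(k < n) w i k)%:Z else - (w i j)%:Z).

Definition is_connected_laplacian {n : nat} (M : 'M[int]_n) : Prop :=
  exists w, multigraph w /\ graph_connected w /\ M = laplacian w.

Arguments realmx R {n} M.
Arguments psd R {n} M.
Arguments posdef R {n} M.
Arguments largest_eigenvalue R {n} M l.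
Arguments smallest_eigenvalue R {n} M l.

(* Main.v *)
Require Import Defs.
From HB Require Import structures.
From mathcomp Require Import all_boot all_order all_algebra.
From mathcomp Require Import all_classical all_reals.
From mathcomp Require Import complex spectral sesquilinear.
From mathcomp Require Import zify ring lra.
From Stdlib Require Import Classical_Prop.
Import Order.TTheory GRing.Theory Num.Theory.
Local Open Scope ring_scope.

Section Spec.
Variable R : rcfType.
Local Notation toC := (real_complex R).

Lemma decomp n (A : 'M[R]_n) : A^T = A ->
  exists d : 'I_n -> R, (forall k, eigenvalue A (d k)) /\
   forall v : 'cV[R]_n, exists u : 'I_n -> R, (forall k, 0 <= u k) /\
     (v^T *m A *m v) 0 0 = \sum_k d k * u k /\ (v^T *m v) 0 0 = \sum_k u k.
Proof.
move=> symA.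
set B := map_mx toC A.
have Breal : B \is a mxOver Num.real.
  by apply/mxOverP => i j; rewrite mxE; apply/complex_realP; exists (A i j).
have Bsym : B \is symmetricmx.
  apply/is_hermitianmxP; rewrite expr0 scale1r; apply/matrixP => i j.
  by rewrite !mxE /= -{1}symA mxE.
have Bherm := realsym_hermsym Bsym Breal.
have Bnorm := hermitian_normalmx Bherm.
have /orthomx_spectralP BE := Bnorm.
have Dreal := hermitian_spectral_diag_real Bherm.
have PU := spectral_unitarymx B.
have Punit := spectral_unit B.
move: BE Dreal PU Punit.
set P := spectralmx B; set D := spectral_diag B => BE Dreal PU Punit.
have DE k : D 0 k = toC (complex.Re (D 0 k)) by rewrite RRe_real // (mxOverP Dreal).
exists (fun k => complex.Re (D 0 k)); split.
  move=> k; rewrite eigenvalue_root_char -(fmorph_root toC) map_char_poly.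
  rewrite -eigenvalue_root_char.
  suff H : eigenvalue B (D 0 k) by move: H; rewrite {1}(DE k).
  apply/eigenvalueP; exists ('e_k *m P).
    by rewrite BE !mulmxA mulmxK // -[_ *m diag_mx D]rowE row_diag_mx -scalemxAl.
  apply/eqP => h; have := congr1 (mulmx^~ (invmx P)) h.
  rewrite mulmxK // mul0mx => /matrixP/(_ 0 k); rewrite !mxE !eqxx /= => /eqP.
  by rewrite oner_eq0.
move=> v.
set w := map_mx toC v; set y := P *m w.
exists (fun k => (complex.Re (y k 0))^+2 + (complex.Im (y k 0))^+2).
have wreal i j : Num.conj (w i j) = w i j.
  by rewrite !mxE conj_Creal //; apply/complex_realP; exists (v i j).
have yT : (map_mx Num.conj y)^T = w^T *m invmx P.
  rewrite invmx_unitary //; apply/matrixP => i j; rewrite !mxE rmorph_sum; apply: eq_bigr => l _; rewrite !mxE rmorphM mulrC; congr (_ * _); apply: conj_Creal; apply/complex_realP; by exists (v l i).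
split.
  by move=> k; rewrite addr_ge0 // sqr_ge0.
split; apply: complexI.
  have -> : toC ((v^T *m A *m v) 0 0) = (w^T *m B *m w) 0 0.
    by rewrite /w /B map_trmx -!map_mxM [RHS]mxE.
  rewrite BE !mulmxA -yT -mulmxA mul_mx_diag mxE rmorph_sum; apply: eq_bigr => k _.
  rewrite -/y 3!mxE rmorphM.
  transitivity (D 0 k * `|y k 0|^+2); last by congr (_ * _); [exact: DE | exact: (esym (add_Re2_Im2 _))].
  by rewrite normCK [_^* * D 0 k]mulrC -mulrA [y k 0 * _]mulrC.
have -> : toC ((v^T *m v) 0 0) = (w^T *m w) 0 0.
  by rewrite /w map_trmx -map_mxM [RHS]mxE.
rewrite -{2}(mulKmx Punit w) !mulmxA -yT -mulmxA -/y mxE rmorph_sum; apply: eq_bigr => k _.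
rewrite -/y 2!mxE -normCKC; exact: (esym (add_Re2_Im2 _)).
Qed.
End Spec.

Lemma ray_up (R : rcfType) n (A : 'M[R]_n) (c : R) : A^T = A ->
  (forall a, eigenvalue A a -> a <= c) ->
  forall v : 'cV[R]_n, (v^T *m A *m v) 0 0 <= c * (v^T *m v) 0 0.
Proof.
move=> sA hc v; have [d [hd hv]] := @decomp _ _ _ sA; have [u [u0 [-> ->]]] := hv v.
rewrite mulr_sumr; apply: ler_sum => k _; apply: ler_wpM2r => //; exact: hc.
Qed.

Lemma ray_lo (R : rcfType) n (A : 'M[R]_n) (c : R) : A^T = A ->
  (forall a, eigenvalue A a -> c <= a) ->
  forall v : 'cV[R]_n, c * (v^T *m v) 0 0 <= (v^T *m A *m v) 0 0.
Proof.
move=> sA hc v; have [d [hd hv]] := @decomp _ _ _ sA; have [u [u0 [-> ->]]] := hv v.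
rewrite mulr_sumr; apply: ler_sum => k _; apply: ler_wpM2r => //; exact: hc.
Qed.

Lemma mxE_add (R : pzRingType) m n (A B : 'M[R]_(m, n)) i j : (A + B) i j = A i j + B i j.
Proof. by rewrite mxE. Qed.
Lemma mxE_scale (R : pzRingType) m n (c : R) (A : 'M[R]_(m, n)) i j : (c *: A) i j = c * A i j.
Proof. by rewrite mxE. Qed.

Lemma psd0 (R : realFieldType) n (A : 'M[R]_n) (x : 'cV[R]_n) : A^T = A ->
  (forall v : 'cV[R]_n, 0 <= (v^T *m A *m v) 0 0) ->
  (x^T *m A *m x) 0 0 = 0 -> A *m x = 0.
Proof.
move=> sA psdA qx; apply/matrixP => k l; rewrite ord1 {l} [RHS]mxE.
set z : 'cV[R]_n := delta_mx k 0.
set b := (A *m x) k 0.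
set a := (z^T *m A *m z) 0 0.
have a0 : 0 <= a := psdA z.
have hb : (z^T *m A *m x) 0 0 = b by rewrite -mulmxA /z trmx_delta -rowE mxE.
have hb' : (x^T *m A *m z) 0 0 = b.
  have -> : (x^T *m A *m z) 0 0 = ((x^T *m A *m z)^T) 0 0 by rewrite [RHS]mxE.
  by rewrite !trmx_mul trmxK sA mulmxA.
have key t : 0 <= 2 * t * b + t^+2 * a.
  have := psdA (x + t *: z).
  have -> : (x + t *: z)^T *m A *m (x + t *: z) = x^T *m A *m x + t *: (x^T *m A *m z)
       + t *: (z^T *m A *m x) + (t^+2) *: (z^T *m A *m z).
    by rewrite [(x + t *: z)^T]linearD /= [(t *: z)^T]linearZ /= !mulmxDl !mulmxDr -!scalemxAl -!scalemxAr scalerA expr2 !addrA.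
  by rewrite !mxE_add !mxE_scale qx hb hb' -/a => h; nra.
have a1 : a + 1 != 0 by rewrite gt_eqF //; lra.
set t := - b / (a + 1).
have ht : (a + 1) * t = - b by rewrite /t; field.
have h1 := key t.
have h2 : t ^+ 2 <= 0 by nra.
have t0 : t = 0.
  by apply/eqP; rewrite -sqrf_eq0 eq_le h2 sqr_ge0.
by move: ht; rewrite t0 mulr0 => /eqP; rewrite eq_sym oppr_eq0 => /eqP.
Qed.


Lemma mxE_sub (R : pzRingType) m n (A B : 'M[R]_(m, n)) i j : (A - B) i j = A i j - B i j.
Proof. by rewrite !mxE. Qed.

Lemma i1 (a : int) : a <= a * a. Proof. nia. Qed.
Lemma i2 (a : int) : - a <= a * a. Proof. nia. Qed.
Lemma i3 (a : int) : a != 0 -> 1 <= a * a. Proof. move=> h. nia. Qed.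

Lemma sq_le_sum n (x : 'cV[int]_n) k : x k 0 * x k 0 <= (x^T *m x) 0 0.
Proof.
rewrite mxE (bigD1 k) //= mxE lerDl.
by apply: sumr_ge0 => l _; rewrite mxE -expr2 sqr_ge0.
Qed.

Lemma sq2_le_sum n (x : 'cV[int]_n) i j : i != j ->
  x i 0 * x i 0 + x j 0 * x j 0 <= (x^T *m x) 0 0.
Proof.
move=> ij; rewrite mxE (bigD1 i) //= (bigD1 j) 1?eq_sym //= !mxE addrA lerDl.
by apply: sumr_ge0 => l _; rewrite mxE -expr2 sqr_ge0.
Qed.

Lemma key n (M : 'M[int]_n) (mu : int) : collapsed_value M mu ->
  exists (x : 'cV[int]_n) (i j : 'I_n), [/\ i != j, (M - mu%:M) *m x = e_ i - e_ j,
   1 <= (x^T *m x) 0 0, x i 0 - x j 0 <= (x^T *m x) 0 0 /\ - (x i 0 - x j 0) <= (x^T *m x) 0 0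
   & (x^T *m M *m x) 0 0 = mu * (x^T *m x) 0 0 + (x i 0 - x j 0)].
Proof.
rewrite /collapsed_value /spread => H; apply: NNPP => Hn; apply: H => i j ij [x Hx]; apply: Hn.
exists x, i, j; split => //.
- have [k xk | all0] := pickP (fun k => x k 0 != 0).
    by apply: (le_trans _ (sq_le_sum _ x k)); apply: i3.
  exfalso.
  have x0 : x = 0.
    by apply/matrixP => k l; rewrite ord1 mxE; apply/eqP; move: (all0 k) => /negbFE.
  move: Hx; rewrite x0 mulmx0 => /matrixP/(_ i 0); rewrite /e_ !mxE !eqxx (negbTE ij) /= subr0.
  by move=> /eqP; rewrite eq_sym oner_eq0.
- have := @sq2_le_sum _ x _ _ ij; have := i1 (x i 0); have := i2 (x j 0).
  have := i2 (x i 0); have := i1 (x j 0); split; lia.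
have E : (x^T *m (M - mu%:M) *m x) 0 0 = x i 0 - x j 0.
  by rewrite -mulmxA Hx /e_ mulmxBr -!colE !mxE.
move: E; rewrite mulmxBr mulmxBl mul_mx_scalar -scalemxAl mxE_sub mxE_scale => E.
by rewrite -E addrC subrK.
Qed.

Lemma r1 (R : realFieldType) (m S T l q : R) : 1 <= S -> -T <= S -> m * S + T <= l * S ->
  l + q < m -> 1 <= q -> False.
Proof. move=> *; nra. Qed.

Lemma r2 (R : realFieldType) (m S T l q : R) : 1 <= S -> T <= S -> l * S <= m * S + T ->
  m < l - q -> 1 <= q -> False.
Proof. move=> *; nra. Qed.

Lemma qcast (R : realType) n (M : 'M[int]_n) (x : 'cV[int]_n) :
  ((map_mx (intr : int -> R) x)^T *m Defs.realmx R M *m map_mx (intr : int -> R) x) 0 0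
  = ((x^T *m M *m x) 0 0)%:~R.
Proof.
rewrite (_ : Defs.realmx R M = map_mx intr M) //.
by rewrite map_trmx -!map_mxM mxE.
Qed.

Lemma ncast (R : realType) n (x : 'cV[int]_n) :
  ((map_mx (intr : int -> R) x)^T *m map_mx (intr : int -> R) x) 0 0 = ((x^T *m x) 0 0)%:~R.
Proof. by rewrite map_trmx -!map_mxM mxE. Qed.

Lemma map_intr0 (R : realType) m n (X : 'M[int]_(m, n)) : map_mx (intr : int -> R) X = 0 -> X = 0.
Proof.
move=> h; apply/matrixP => a b; move/matrixP: h => /(_ a b).
by rewrite !mxE => /eqP; rewrite intr_eq0 => /eqP.
Qed.

Theorem proposition3p4 (R : realType) (n : nat) (M : 'M[int]_n) :
  M^T = M -> psd R M ->
  (* (i) *)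
  (forall l1 : R, largest_eigenvalue R M l1 ->
     forall mu : int, (mu < -1 \/ l1 + Num.sqrt 2 < mu%:~R) ->
       ~ collapsed_value M mu) /\
  (* (ii) *)
  ((exists i j : 'I_n, i != j /\ col i M = col j M) \/
   (exists i j : 'I_n, i != j /\ M *m e_ i = - e_ j) ->
     collapsed_value M (-1)) /\
  (* (iii) *)
  (posdef R M \/ is_connected_laplacian M ->
     forall mu : int, mu < 0 -> ~ collapsed_value M mu) /\
  (* (iv) *)
  (posdef R M -> forall ln : R, smallest_eigenvalue R M ln -> 0 < ln ->
     forall mu : int, collapsed_value M mu -> ln - Num.sqrt 2 <= mu%:~R).
Proof.
move=> sM psdM.
have rE : Defs.realmx R M = map_mx intr M by [].
have sMR : (Defs.realmx R M)^T = Defs.realmx R M.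
  by apply/matrixP => a b; rewrite !mxE -[in RHS]sM mxE.
have sq1 : 1 <= Num.sqrt (2 : R).
  by rewrite -{1}sqrtr1 ler_sqrt // ler1n.
split.
  move=> l1 [_ hmax] mu hmu /key [x [i [j [ij Hx s1 [ts nts] qE]]]].
  move: s1 ts nts qE; set s := (x^T *m x) 0 0; set t := x i 0 - x j 0 => s1 ts nts qE.
  case: hmu => hmu.
    have := psdM (map_mx intr x); rewrite qcast qE ler0z => h; nia.
  have := @ray_up _ _ _ _ sMR hmax (map_mx intr x); rewrite qcast ncast qE rmorphD rmorphM /= -/s => h.
  have S1 : 1 <= (s%:~R : R) by rewrite ler1z.
  have T1 : - (t%:~R : R) <= s%:~R by rewrite -rmorphN ler_int.
  exact: (r1 _ _ _ _ _ _ S1 T1 h hmu sq1).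
have NE : forall v : 'cV[int]_n, (M - (-1)%:M) *m v = M *m v + v.
  by move=> v; rewrite mulmxBl mul_scalar_mx scaleN1r opprK.
split.
  case=> [[i [j [ij hc]]] | [i [j [ij he]]]]; rewrite /collapsed_value /spread => H;
    apply: (H i j ij).
    exists (e_ i - e_ j); rewrite NE mulmxBr /e_ -!colE hc subrr add0r //.
  by exists (e_ i); rewrite NE he addrC.
split.
  move=> hyp mu mu0 /key [x [i [j [ij Hx s1 [ts nts] qE]]]].
  move: s1 ts nts qE; set s := (x^T *m x) 0 0; set t := x i 0 - x j 0 => s1 ts nts qE.
  case: hyp => [pd | [w [[wsym wdiag] [wconn ME]]]].
    have xr0 : map_mx (intr : int -> R) x != 0.
      apply/eqP => h; move: (ncast R _ x); rewrite h trmx0 mul0mx mxE -/s => /esym/eqP.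
      by rewrite intr_eq0 => /eqP s0; move: s1; rewrite s0.
    by have := pd _ xr0; rewrite qcast qE ltr0z => h; nia.
  case: (ltrP mu (-1)) => hmu.
    by have := psdM (map_mx intr x); rewrite qcast qE ler0z => h; nia.
  have mu1 : mu = -1 by lia.
  have q0 : (x^T *m M *m x) 0 0 = 0.
    have := psdM (map_mx intr x); rewrite qcast qE ler0z mu1 => h.
    lia.
  have Mx0 : M *m x = 0.
    apply: (map_intr0 R); rewrite map_mxM -rE.
    by apply: (@psd0 _ _ _ _ sMR psdM); rewrite qcast q0.
  have xE : x = e_ i - e_ j by rewrite -Hx mu1 NE Mx0 add0r.
  rewrite xE in Mx0.
  move/matrixP: Mx0 => /(_ i 0); rewrite /e_ mulmxBr -!colE mxE_sub !mxE ME !mxE eqxx (negbTE ij).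
  move=> h.
  have h0 : (\sum_(k < n) w i k = 0)%N by lia.
  have := wconn i j; move/connectP => [p pth jE].
  case: p pth jE => [|k p] /=.
    by move=> _ jE; rewrite jE eqxx in ij.
  move=> /andP [hik _] _.
  move: h0; rewrite (bigD1 k) //=; lia.
move=> _ ln [_ hmin] ln0 mu /key [x [i [j [ij Hx s1 [ts nts] qE]]]].
move: s1 ts nts qE; set s := (x^T *m x) 0 0; set t := x i 0 - x j 0 => s1 ts nts qE.
have := @ray_lo _ _ _ _ sMR hmin (map_mx intr x); rewrite qcast ncast qE rmorphD rmorphM /= -/s => h.
have S1 : 1 <= (s%:~R : R) by rewrite ler1z.
have T1 : (t%:~R : R) <= s%:~R by rewrite ler_int.
rewrite leNgt; apply/negP => hlt.
exact: (r2 _ _ _ _ _ _ S1 T1 h hlt sq1).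
Qed.
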